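(* Fix a merge tree $(T,f)$. The maps $\mathcal L$ and $\mathcal T$ are well defined and mutually inverse, hence give a bijection between the set of ordered merge trees $(T,f,(\le_h))$ and the set of leaf-ordered merge trees $(T,f,\sqsubseteq_L)$; that is, $\mathcal T(\mathcal L((T,f,(\le_h))))=(T,f,(\le_h))$ for every layer-order $(\le_h)$ and $\mathcal L(\mathcal T((T,f,\sqsubseteq_L)))=(T,f,\sqsubseteq_L)$ for every leaf-order $\sqsubseteq_L$.
   Context: A merge tree $(T,f)$: a finite rooted tree $T$ identified with its topological realisation, with a continuous $f\colon T\to\mathbb{R}\cup\{\infty\}$ strictly increasing towards the root, $f(v)=\infty$ iff $v$ is the root; the lowest leaf has height $0$; $L(T)$ is the set of leaves. $x_1\preceq x_2$ iff there is an $f$-increasing path from $x_1$ to $x_2$; $T_x$ is the subtree of descendants of $x$; $\mathrm{lca}$ is the lowest common ancestor; $\mathrm{anc}_h(x)$ is the unique ancestor of $x$ at height $h\ge f(x)$; $\mathbb{L}_h=\{x:f(x)=h\}$. A layer-order is a family $(\le_h)_{h\ge0}$ of total orders on the $\mathbb{L}_h$ that is consistent: for $h_1\le h_2$ and $x_1,x_2\in\mathbb{L}_{h_1}$, $x_1\le_{h_1}x_2$ implies $\mathrm{anc}_{h_2}(x_1)\le_{h_2}\mathrm{anc}_{h_2}(x_2)$; $(T,f,(\le_h))$ is an ordered merge tree. A leaf-order is a total order $\sqsubseteq_L$ on $L(T)$ that separates subtrees: for leaves $u,u_1,u_2$ with $u_1\sqsubseteq_L u\sqsubseteq_L u_2$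 we have $u\in T_{\mathrm{lca}(u_1,u_2)}$; $(T,f,\sqsubseteq_L)$ is a leaf-ordered merge tree. $\mathcal L((T,f,(\le_h)))=(T,f,\sqsubseteq_L)$ where, for leaves $u_1,u_2$ and $h=\max(f(u_1),f(u_2))$, $u_1\sqsubseteq_L u_2$ iff $\mathrm{anc}_h(u_1)\le_h\mathrm{anc}_h(u_2)$. $\mathcal T((T,f,\sqsubseteq_L))=(T,f,(\le_h))$ where, for $x_1,x_2\in\mathbb{L}_h$, $x_1\le_h x_2$ iff $x_1=x_2$ or $u_1\sqsubseteq_L u_2$ for all leaves $u_1\in T_{x_1}$, $u_2\in T_{x_2}$. *)

(* Defs.v *)
From Stdlib Require Import Reals.
From mathcomp Require Import all_boot.

Set Implicit Arguments.
Unset Strict Implicit.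
Unset Printing Implicit Defensive.

Local Open Scope R_scope.

(* A merge tree (T,f): a finite rooted tree given by a parent map on a finite
   vertex type V (the root is its own parent), with real heights f on the
   non-root vertices, f strictly increasing towards the root; the root has
   height +infinity (f on the root is irrelevant). *)
Record merge_tree := MergeTree {
  mt_V : finType;
  mt_root : mt_V;
  mt_par : mt_V -> mt_V;
  mt_f : mt_V -> R;
  mt_par_root : mt_par mt_root = mt_root;
  mt_rooted : forall v, exists k, iter k mt_par v = mt_root;
  mt_incr : forall v, v <> mt_root -> mt_par v <> mt_root ->
              mt_f v < mt_f (mt_par v);
  mt_low0 : exists u, (u <> mt_root /\ forall w, mt_par w <> u) /\ mt_f u = 0;
  mt_lowest : forall u, (u <> mt_root /\ forall w, mt_par w <> u) -> 0 <= mt_f u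
}.

Section MergeTreeDefs.
Variable M : merge_tree.
Local Notation V := (mt_V M).
Local Notation root := (mt_root M).
Local Notation par := (@mt_par M).
Local Notation f := (@mt_f M).

Definition leaf (u : V) : Prop := u <> root /\ forall w, par w <> u.

(* Points of the topological realisation: [Pt v h] is the point at height h
   on the edge from the non-root vertex v to its parent (h = f v is the vertex
   v itself); [Top] is the root (height +infinity). *)
Inductive pt := Pt of V & R | Top.

Definition valid (x : pt) : Prop :=
  match x with
  | Pt v h => v <> root /\ f v <= h /\ (par v = root \/ h < f (par v))
  | Top => True
  end.

Definition on_layer (h : R) (x : pt) : Prop :=
  valid x /\ match x with Pt _ h' => h' = h | Top => False end.

(* x1 ⪯ x2 : there is an f-increasing path from x1 to x2 *)
Definition prec (x y : pt) : Prop :=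
  match x, y with
  | _, Top => True
  | Top, Pt _ _ => False
  | Pt v h, Pt w h' => h <= h' /\ exists k, iter k par v = w
  end.

Definition is_anc (h : R) (x y : pt) : Prop := on_layer h y /\ prec x y.

Definition is_lca (x1 x2 z : pt) : Prop :=
  valid z /\ prec x1 z /\ prec x2 z /\
  forall z', valid z' -> prec x1 z' -> prec x2 z' -> prec z z'.

Definition leafpt (u : V) : pt := Pt u (f u).

Definition is_layer_order (le : R -> pt -> pt -> Prop) : Prop :=
  (forall h, 0 <= h ->
     (forall x, on_layer h x -> le h x x) /\
     (forall x y, on_layer h x -> on_layer h y -> le h x y -> le h y x -> x = y) /\
     (forall x y z, on_layer h x -> on_layer h y -> on_layer h z ->
        le h x y -> le h y z -> le h x z) /\
     (forall x y, on_layer h x -> on_layer h y -> le h x y \/ le h y x)) /\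
  (forall h1 h2 x1 x2 y1 y2, 0 <= h1 -> h1 <= h2 ->
     on_layer h1 x1 -> on_layer h1 x2 -> le h1 x1 x2 ->
     is_anc h2 x1 y1 -> is_anc h2 x2 y2 -> le h2 y1 y2).

Definition is_leaf_order (lo : V -> V -> Prop) : Prop :=
  ((forall u, leaf u -> lo u u) /\
   (forall u v, leaf u -> leaf v -> lo u v -> lo v u -> u = v) /\
   (forall u v w, leaf u -> leaf v -> leaf w -> lo u v -> lo v w -> lo u w) /\
   (forall u v, leaf u -> leaf v -> lo u v \/ lo v u)) /\
  (forall u u1 u2 z, leaf u -> leaf u1 -> leaf u2 ->
     lo u1 u -> lo u u2 -> is_lca (leafpt u1) (leafpt u2) z ->
     prec (leafpt u) z).

Definition L_map (le : R -> pt -> pt -> Prop) : V -> V -> Prop :=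
  fun u1 u2 => exists y1 y2,
    is_anc (Rmax (f u1) (f u2)) (leafpt u1) y1 /\
    is_anc (Rmax (f u1) (f u2)) (leafpt u2) y2 /\
    le (Rmax (f u1) (f u2)) y1 y2.

Definition T_map (lo : V -> V -> Prop) : R -> pt -> pt -> Prop :=
  fun h x1 x2 => x1 = x2 \/
    forall u1 u2, leaf u1 -> leaf u2 ->
      prec (leafpt u1) x1 -> prec (leafpt u2) x2 -> lo u1 u2.

End MergeTreeDefs.

(* Main.v *)
Require Import Defs.
From Stdlib Require Import Reals Lra Classical.
From mathcomp Require Import all_boot.
Set Implicit Arguments.
Unset Strict Implicit.
Local Open Scope R_scope.

Definition upv {M : merge_tree} (v w : mt_V M) := exists k, iter k (@mt_par M) v = w.
Definition onl {M : merge_tree} (h : R) (a : mt_V M) :=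
  a <> mt_root M /\ mt_f a <= h /\ (mt_par a = mt_root M \/ h < mt_f (mt_par a)).

Lemma iter_root M k : iter k (@mt_par M) (mt_root M) = mt_root M.
Proof. elim: k => //= k ->; exact: mt_par_root. Qed.

Lemma upv_refl M (v : mt_V M) : upv v v.
Proof. by exists 0%N. Qed.

Lemma upv_trans M (a b c : mt_V M) : upv a b -> upv b c -> upv a c.
Proof. move=> [k1 H1] [k2 H2]; exists (k2 + k1)%N; by rewrite iterD H1. Qed.

Lemma upv_par M (v : mt_V M) : upv v (mt_par v).
Proof. by exists 1%N. Qed.

Lemma upv_root M (w : mt_V M) : upv (mt_root M) w -> w = mt_root M.
Proof. move=> [k <-]; exact: iter_root. Qed.

Lemma upv_total M (v a b : mt_V M) : upv v a -> upv v b -> upv a b \/ upv b a.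
Proof.
move=> [i <-] [j <-]; case: (leqP i j) => hij.
- left; exists (j - i)%N; by rewrite -iterD subnK.
- right; exists (i - j)%N; rewrite -iterD subnK //; exact: ltnW.
Qed.

Lemma upv_step M (v w : mt_V M) : upv v w -> v = w \/ upv (mt_par v) w.
Proof. move=> [[|k] <-]; [by left | right; exists k; by rewrite iterSr]. Qed.

Lemma f_mono M (v w : mt_V M) : upv v w -> w <> mt_root M -> mt_f v <= mt_f w.
Proof.
move=> [k <-]; elim: k => [|k IH] /=; first by move=> _; lra.
move=> hw.
have hk : iter k (@mt_par M) v <> mt_root M.
  by move=> e; apply: hw; rewrite e mt_par_root.
have := mt_incr hk hw; have := IH hk; lra.
Qed.

Lemma leaf_up M (u x : mt_V M) : leaf u -> upv x u -> x = u.
Proof. move=> [_ hl] [[|k] //= e]; by case: (hl _ e). Qed.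

Lemma layer_up M h1 h2 (a b : mt_V M) : onl h1 a -> onl h2 b -> h1 <= h2 -> upv b a -> a = b.
Proof.
move=> [ha [fa _]] [hb [fb pb]] h12 /upv_step [->//|hu].
have hpr : mt_par b <> mt_root M by move=> e; apply: ha; apply: upv_root; rewrite -e.
have := f_mono hu ha; case: pb => // pb; lra.
Qed.

Lemma chain M h1 h2 (v a b : mt_V M) : upv v a -> upv v b -> onl h1 a -> onl h2 b -> h1 <= h2 -> upv a b.
Proof.
move=> va vb oa ob h12; case: (upv_total va vb) => // ba.
rewrite (layer_up oa ob h12 ba); exact: upv_refl.
Qed.

Lemma onl_uniq M h (v a b : mt_V M) : upv v a -> upv v b -> onl h a -> onl h b -> a = b.
Proof.
move=> va vb oa ob; case: (upv_total va vb) => e.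
- by rewrite (layer_up ob oa (Rle_refl h) e).
- exact: (layer_up oa ob (Rle_refl h) e).
Qed.

Lemma anc_inv M h (x y : pt M) : is_anc h x y ->
  exists v h0 a, x = Pt v h0 /\ y = Pt a h /\ onl h a /\ h0 <= h /\ upv v a.
Proof.
case: y => [a h'|]; last by case=> [[]].
case: x => [v h0|]; last by case=> _ [].
move=> [[[ha [fa pa]] eh] [hle hk]]; subst h'.
by exists v, h0, a; split; [|split; [|split; [split; [|split]|split]]].
Qed.

Lemma anc_mk M h h0 (v a : mt_V M) : onl h a -> h0 <= h -> upv v a -> is_anc h (Pt v h0) (Pt a h).
Proof. move=> [ha [fa pa]] hh va; split; [split; [split; [|split]|]|split] => //. Qed.

Lemma anc_uniq M h (x y1 y2 : pt M) : is_anc h x y1 -> is_anc h x y2 -> y1 = y2.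
Proof.
move=> /anc_inv [v [h0 [a [-> [-> [oa [_ va]]]]]]] /anc_inv [v' [h0' [b [[ev _] [-> [ob [_ vb]]]]]]].
subst v'; by rewrite (onl_uniq va vb oa ob).
Qed.

Lemma anc_lift M h1 h2 (x y Y : pt M) : is_anc h1 x y -> is_anc h2 x Y -> h1 <= h2 -> is_anc h2 y Y.
Proof.
move=> /anc_inv [v [h0 [a [-> [-> [oa [_ va]]]]]]] /anc_inv [v' [h0' [b [[ev _] [-> [ob [_ vb]]]]]]] h12.
subst v'; apply: anc_mk => //; exact: (chain va vb oa ob h12).
Qed.

Lemma anc_self M h (y : pt M) : on_layer h y -> is_anc h y y.
Proof.
case: y => [a h'|]; last by case.
move=> [vy eh]; subst h'; split; first by split.
split; [exact: Rle_refl| exact: upv_refl].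
Qed.

Lemma prec_trans M (x y z : pt M) : prec x y -> prec y z -> prec x z.
Proof.
case: z => [c hc|]; last by case: x.
case: y => [b hb|]; last by case: x.
case: x => [a ha|] //= [h1 e1] [h2 e2]; split; first lra.
exact: upv_trans e1 e2.
Qed.

Lemma anc_trans M h (x y z : pt M) : prec x y -> is_anc h y z -> is_anc h x z.
Proof. move=> p [o p']; split => //; exact: prec_trans p p'. Qed.

Lemma anc_exists M h0 h (v : mt_V M) : valid (Pt v h0) -> h0 <= h -> exists y, is_anc h (Pt v h0) y.
Proof.
move=> [hv [fv _]] hh.
have core : forall k (v : mt_V M), iter k (@mt_par M) v = mt_root M -> v <> mt_root M ->
    mt_f v <= h -> exists a, upv v a /\ onl h a.
  elim=> [|k IH] w; first by move=> /= ->.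
  rewrite iterSr => ek hw fw.
  case: (classic (mt_par w = mt_root M \/ h < mt_f (mt_par w))) => c.
    by exists w; split; [exact: upv_refl| split].
  have c1 : mt_par w <> mt_root M by move=> e; apply: c; left.
  have c2 : mt_f (mt_par w) <= h by apply: Rnot_lt_le => e; apply: c; right.
  have [a [pa oa]] := IH _ ek c1 c2.
  by exists a; split => //; exact: upv_trans (upv_par w) pa.
have [k ek] := mt_rooted v.
have [a [va oa]] := core k v ek hv ltac:(lra).
exists (Pt a h); exact: anc_mk.
Qed.

Lemma leaf_below M (v : mt_V M) : v <> mt_root M -> exists u, leaf u /\ upv u v.
Proof.
move=> hv.
pose S (v : mt_V M) := [pred w : mt_V M | (w != mt_root M) &&
   (if Rlt_dec (mt_f w) (mt_f v) then true else false)].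
suff: forall n w, w <> mt_root M -> (#|S w| < n)%N -> exists u, leaf u /\ upv u w.
  by move=> H; apply: (H _ v hv).
elim=> [|n IH] w hw hc //.
case: (classic (leaf w)) => [lw|nl]; first by exists w; split => //; exact: upv_refl.
have [x ex] : exists x, mt_par x = w.
  by apply: NNPP => hn; apply: nl; split => // x e; apply: hn; exists x.
have hx : x <> mt_root M by move=> e; apply: hw; rewrite -ex e mt_par_root.
have fx : mt_f x < mt_f w by have := mt_incr hx; rewrite ex; apply.
have lt : (#|S x| < #|S w|)%N.
  rewrite (cardD1 x (S w)).
  have -> : x \in S w by rewrite !inE; apply/andP; split; [apply/eqP|case: Rlt_dec].
  rewrite add1n ltnS; apply: subset_leq_card; apply/subsetP => y.
  rewrite !inE => /andP [ny]; case: Rlt_dec => // fy _.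
  apply/andP; split; first by apply/eqP => e; subst y; lra.
  rewrite ny /=; case: Rlt_dec => // n'; lra.
have [u [lu uu]] := IH x hx ltac:(apply: leq_trans lt _; exact: hc).
by exists u; split => //; apply: upv_trans uu _; rewrite -ex; exact: upv_par.
Qed.

Lemma leaf_onl M (u : mt_V M) : leaf u -> onl (mt_f u) u.
Proof.
move=> [hu hl]; split => //; split; first exact: Rle_refl.
case: (classic (mt_par u = mt_root M)) => e; [by left | right; exact: mt_incr].
Qed.

Lemma leaf_valid M (u : mt_V M) : leaf u -> valid (leafpt u).
Proof. by move=> /leaf_onl. Qed.

Lemma leaf_layer M (u : mt_V M) : leaf u -> on_layer (mt_f u) (leafpt u).
Proof. by move=> /leaf_onl. Qed.

Lemma leaf_nonneg M (u : mt_V M) : leaf u -> 0 <= mt_f u.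
Proof. exact: mt_lowest. Qed.

Lemma layer_leaf M h (x : pt M) : on_layer h x -> 0 <= h /\ exists u, leaf u /\ prec (leafpt u) x.
Proof.
case: x => [v h'|]; last by case.
move=> [[hv [fv _]] eh]; subst h'.
have [u [lu uv]] := leaf_below hv.
have := f_mono uv hv; have := leaf_nonneg lu => h1 h2.
split; first lra.
exists u; split => //; split => //; lra.
Qed.

Lemma leaf_anc_eq M (u v : mt_V M) (Y : pt M) : leaf u -> leaf v ->
  is_anc (mt_f v) (leafpt u) Y -> is_anc (mt_f v) (leafpt v) Y -> u = v.
Proof.
move=> lu lv a1 a2.
have e := anc_uniq a2 (anc_self (leaf_layer lv)); subst Y.
move: a1 => /anc_inv [w [h0 [a [e1 [e2 [_ [_ va]]]]]]].
case: e1 => e1 _; case: e2 => e2; subst w a.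
exact: leaf_up lv va.
Qed.

Lemma min_nat (P : nat -> Prop) : (exists n, P n) -> exists n, P n /\ forall m, P m -> (n <= m)%N.
Proof.
move=> [n]; elim: n {-2}n (leqnn n) => [|n IH] k hk pk.
  exists k; split => // m _; move: hk; rewrite leqn0 => /eqP ->; done.
case: (classic (exists m, (m < k)%N /\ P m)) => [[m [hm pm]]|hn].
  apply: (IH m) => //; rewrite -ltnS; exact: leq_trans hm hk.
exists k; split => // m pm; rewrite leqNgt; apply/negP => hm; apply: hn; by exists m.
Qed.

Lemma lca_exists M (p q : mt_V M) : exists z, is_lca (leafpt p) (leafpt q) z.
Proof.
have [k [ck mk]] : exists k, upv q (iter k (@mt_par M) p) /\
   forall m, upv q (iter m (@mt_par M) p) -> (k <= m)%N.
  apply: min_nat; have [n en] := mt_rooted p; exists n; rewrite en.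
  have [n' en'] := mt_rooted q; by exists n'.
set c := iter k (@mt_par M) p in ck mk.
have pc : upv p c by exists k.
have cmin : forall w, upv p w -> upv q w -> upv c w.
  move=> w [j <-] qw; have kj := mk j qw; exists (j - k)%N; by rewrite /c -iterD subnK.
case: (classic (c = mt_root M)) => hc.
  exists (Top M); split => //; split => //; split => //.
  case=> [w h|] // [hw _] [_ pw] [_ qw]; exfalso; apply: hw.
  apply: upv_root; rewrite -hc; exact: cmin.
exists (Pt c (mt_f c)); split.
  split => //; split; first exact: Rle_refl.
  case: (classic (mt_par c = mt_root M)) => e; [by left | right; exact: mt_incr].
split; first by split => //; exact: f_mono pc hc.
split; first by split => //; exact: f_mono ck hc.
case=> [w h|] // [hw [fw _]] [_ pw] [_ qw]; have cw := cmin w pw qw.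
split => //; have := f_mono cw hw; lra.
Qed.

Lemma Rmax_cases a b : Rmax a b = a \/ Rmax a b = b.
Proof. rewrite /Rmax; case: Rle_dec; auto. Qed.

Lemma anc_layer M h (x y : pt M) : is_anc h x y -> on_layer h y.
Proof. by case. Qed.

Lemma lo_lift M (le : R -> pt M -> pt M -> Prop) (Hle : is_layer_order le) h1 h2
  (x x' y y' Y Y' : pt M) : 0 <= h1 -> h1 <= h2 -> is_anc h1 x y -> is_anc h1 x' y' ->
  le h1 y y' -> is_anc h2 x Y -> is_anc h2 x' Y' -> le h2 Y Y'.
Proof.
move=> h0 h12 a1 a2 l b1 b2.
exact: (Hle.2 h1 h2 y y' Y Y' h0 h12 (anc_layer a1) (anc_layer a2) l
  (anc_lift a1 b1 h12) (anc_lift a2 b2 h12)).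
Qed.

Lemma leaf_ancs M (u1 u2 : mt_V M) H : leaf u1 -> leaf u2 ->
  mt_f u1 <= H -> mt_f u2 <= H ->
  exists y1 y2, is_anc H (leafpt u1) y1 /\ is_anc H (leafpt u2) y2.
Proof.
move=> l1 l2 h1 h2.
have [y1 a1] := anc_exists (leaf_valid l1) h1.
have [y2 a2] := anc_exists (leaf_valid l2) h2.
by exists y1, y2.
Qed.

Lemma L_get M (le : R -> pt M -> pt M -> Prop) (u1 u2 : mt_V M) y1 y2 :
  L_map le u1 u2 -> is_anc (Rmax (mt_f u1) (mt_f u2)) (leafpt u1) y1 ->
  is_anc (Rmax (mt_f u1) (mt_f u2)) (leafpt u2) y2 -> le (Rmax (mt_f u1) (mt_f u2)) y1 y2.
Proof.
move=> [z1 [z2 [b1 [b2 l]]]] a1 a2.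
by rewrite (anc_uniq a1 b1) (anc_uniq a2 b2).
Qed.

Lemma L_lift M (le : R -> pt M -> pt M -> Prop) (Hle : is_layer_order le) (u1 u2 : mt_V M) H Y1 Y2 :
  leaf u1 -> L_map le u1 u2 -> Rmax (mt_f u1) (mt_f u2) <= H ->
  is_anc H (leafpt u1) Y1 -> is_anc H (leafpt u2) Y2 -> le H Y1 Y2.
Proof.
move=> l1 [z1 [z2 [b1 [b2 l]]]] hH a1 a2.
apply: (lo_lift Hle _ hH b1 b2 l a1 a2).
have := leaf_nonneg l1; have := Rmax_l (mt_f u1) (mt_f u2); lra.
Qed.

Lemma Rmax_nonneg M (u1 u2 : mt_V M) : leaf u1 -> 0 <= Rmax (mt_f u1) (mt_f u2).
Proof. move=> l; have := leaf_nonneg l; have := Rmax_l (mt_f u1) (mt_f u2); lra. Qed.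

Lemma part1_leaf M (le : R -> pt M -> pt M -> Prop) (Hle : is_layer_order le) :
  is_leaf_order (L_map le).
Proof.
have Hle1 := Hle.1.
split; [split; [|split; [|split]]|].
- move=> u lu.
  have [y1 [y2 [a1 a2]]] := leaf_ancs lu lu (Rmax_l _ _) (Rmax_r _ _).
  have e := anc_uniq a1 a2; subst y2.
  exists y1, y1; split => //; split => //.
  exact: (Hle1 _ (Rmax_nonneg _ lu)).1 _ (anc_layer a1).
- move=> u v lu lv luv lvu.
  have [y1 [y2 [a1 a2]]] := leaf_ancs lu lv (Rmax_l _ _) (Rmax_r _ _).
  have l1 := L_get luv a1 a2.
  have l2 : le (Rmax (mt_f u) (mt_f v)) y2 y1.
    rewrite Rmax_comm; apply: L_get lvu _ _; by rewrite Rmax_comm.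
  have e := (Hle1 _ (Rmax_nonneg _ lu)).2.1 _ _ (anc_layer a1) (anc_layer a2) l1 l2.
  subst y2.
  case: (Rmax_cases (mt_f u) (mt_f v)) => e; rewrite e in a1 a2.
  + by symmetry; apply: leaf_anc_eq lv lu a2 a1.
  + exact: leaf_anc_eq lu lv a1 a2.
- move=> a b c la lb lc lab lbc.
  set H := Rmax (Rmax (mt_f a) (mt_f b)) (mt_f c).
  have fa : mt_f a <= H by have := Rmax_l (mt_f a) (mt_f b); have := Rmax_l (Rmax (mt_f a) (mt_f b)) (mt_f c); rewrite /H; lra.
  have fb : mt_f b <= H by have := Rmax_r (mt_f a) (mt_f b); have := Rmax_l (Rmax (mt_f a) (mt_f b)) (mt_f c); rewrite /H; lra.
  have fc : mt_f c <= H by rewrite /H; exact: Rmax_r.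
  have H0 : 0 <= H by have := leaf_nonneg la; lra.
  have [A [B [aA aB]]] := leaf_ancs la lb fa fb.
  have [C [_ [aC _]]] := leaf_ancs lc lc fc fc.
  have lAB := L_lift Hle la lab (Rmax_lub _ _ _ fa fb) aA aB.
  have lBC := L_lift Hle lb lbc (Rmax_lub _ _ _ fb fc) aB aC.
  have [r [asym [tr tot]]] := Hle1 _ H0.
  have lAC := tr _ _ _ (anc_layer aA) (anc_layer aB) (anc_layer aC) lAB lBC.
  have [y1 [y2 [a1 a2]]] := leaf_ancs la lc (Rmax_l (mt_f a) (mt_f c)) (Rmax_r (mt_f a) (mt_f c)).
  have H0' := Rmax_nonneg c la.
  case: ((Hle1 _ H0').2.2.2 _ _ (anc_layer a1) (anc_layer a2)) => l12.
    by exists y1, y2.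
  have lCA := lo_lift Hle H0' (Rmax_lub _ _ _ fa fc) a2 a1 l12 aC aA.
  have eAC := asym _ _ (anc_layer aA) (anc_layer aC) lAC lCA; subst C.
  have eAB := asym _ _ (anc_layer aA) (anc_layer aB) lAB lBC; subst B.
  suff eac : a = c.
    subst c; exists y1, y1; split => //; split => //.
    exact: (Hle1 _ H0').1 _ (anc_layer a1).
  have : H = mt_f a \/ H = mt_f b \/ H = mt_f c.
    rewrite /H; case: (Rmax_cases (Rmax (mt_f a) (mt_f b)) (mt_f c)) => ->; last by auto.
    case: (Rmax_cases (mt_f a) (mt_f b)) => ->; auto.
  case=> [eH|[eH|eH]]; rewrite eH in aA aB aC.
  + by symmetry; apply: leaf_anc_eq lc la aC aA.
  + have e1 := leaf_anc_eq la lb aA aB; have e2 := leaf_anc_eq lc lb aC aB; congruence.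
  + exact: leaf_anc_eq la lc aA aC.
- move=> u v lu lv.
  have [y1 [y2 [a1 a2]]] := leaf_ancs lu lv (Rmax_l _ _) (Rmax_r _ _).
  case: ((Hle1 _ (Rmax_nonneg _ lu)).2.2.2 _ _ (anc_layer a1) (anc_layer a2)) => l.
    by left; exists y1, y2.
  right; exists y2, y1; rewrite Rmax_comm; by split; [|split].
- move=> u u1 u2 z lu l1 l2 L1 L2 [vz [p1 [p2 _]]].
  case: z vz p1 p2 => [c hz|] //; move=> vz p1 p2.
  have oz : on_layer hz (Pt c hz) by split.
  have [hz0 _] := layer_leaf oz.
  have az1 : is_anc hz (leafpt u1) (Pt c hz) by split.
  have az2 : is_anc hz (leafpt u2) (Pt c hz) by split.
  have f1 : mt_f u1 <= hz := p1.1.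
  have f2 : mt_f u2 <= hz := p2.1.
  have [r [asym _]] := Hle1 _ hz0.
  case: (Rle_lt_dec (mt_f u) hz) => hu.
  + have [a aa] := anc_exists (leaf_valid lu) hu.
    have la1 := L_lift Hle l1 L1 (Rmax_lub _ _ _ f1 hu) az1 aa.
    have la2 := L_lift Hle lu L2 (Rmax_lub _ _ _ hu f2) aa az2.
    have e := asym _ _ (anc_layer az1) (anc_layer aa) la1 la2.
    by rewrite e; case: aa.
  + have [b ab] := anc_exists vz (Rlt_le _ _ hu).
    have ab1 := anc_trans p1 ab.
    have ab2 := anc_trans p2 ab.
    have au := anc_self (leaf_layer lu).
    have hu0 := leaf_nonneg lu.
    have [_ [asym' _]] := Hle1 _ hu0.
    have e1 : Rmax (mt_f u1) (mt_f u) = mt_f u by apply: Rmax_right; lra.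
    have e2 : Rmax (mt_f u) (mt_f u2) = mt_f u by apply: Rmax_left; lra.
    have lb1 : le (mt_f u) b (leafpt u).
      by have := @L_get _ _ _ _ b (leafpt u) L1; rewrite e1; apply.
    have lb2 : le (mt_f u) (leafpt u) b.
      by have := @L_get _ _ _ _ (leafpt u) b L2; rewrite e2; apply.
    have e := asym' _ _ (anc_layer ab) (anc_layer au) lb1 lb2; subst b.
    have e := leaf_anc_eq l1 lu ab1 au; subst u1; lra.
Qed.

Lemma anc_leaf_le M h (u : mt_V M) y : is_anc h (leafpt u) y -> mt_f u <= h.
Proof. move=> /anc_inv [v [h0 [a [e [_ [_ [hh _]]]]]]]; by case: e => _ ->. Qed.

Lemma part1_T M (le : R -> pt M -> pt M -> Prop) (Hle : is_layer_order le) h :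
  0 <= h -> forall x1 x2, on_layer h x1 -> on_layer h x2 ->
  (T_map (L_map le) h x1 x2 <-> le h x1 x2).
Proof.
move=> h0 x1 x2 o1 o2; have [r [asym [_ tot]]] := Hle.1 _ h0; split.
- case=> [<-|H]; first exact: r.
  have [_ [u1 [l1 p1]]] := layer_leaf o1.
  have [_ [u2 [l2 p2]]] := layer_leaf o2.
  have a1 : is_anc h (leafpt u1) x1 by split.
  have a2 : is_anc h (leafpt u2) x2 by split.
  have LL : L_map le u1 u2 := H u1 u2 l1 l2 p1 p2.
  have hm := Rmax_lub _ _ _ (anc_leaf_le a1) (anc_leaf_le a2).
  exact: (L_lift Hle l1 LL hm a1 a2).
- move=> l; case: (classic (x1 = x2)) => [e|ne]; [by left | right].
  move=> u1 u2 l1 l2 p1 p2.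
  have a1 : is_anc h (leafpt u1) x1 by split.
  have a2 : is_anc h (leafpt u2) x2 by split.
  have [y1 [y2 [b1 b2]]] := leaf_ancs l1 l2 (Rmax_l (mt_f u1) (mt_f u2)) (Rmax_r (mt_f u1) (mt_f u2)).
  have H0 := Rmax_nonneg u2 l1.
  case: ((Hle.1 _ H0).2.2.2 _ _ (anc_layer b1) (anc_layer b2)) => l12.
    by exists y1, y2.
  have := lo_lift Hle H0 (Rmax_lub _ _ _ (anc_leaf_le a1) (anc_leaf_le a2)) b2 b1 l12 a2 a1.
  move=> l21; by case: ne; apply: asym.
Qed.

Lemma conv M (lo : mt_V M -> mt_V M -> Prop) (Hlo : is_leaf_order lo) h (x : pt M) p q c :
  leaf p -> leaf q -> leaf c -> on_layer h x -> prec (leafpt p) x -> prec (leafpt q) x ->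
  lo p c -> lo c q -> prec (leafpt c) x.
Proof.
move=> lp lq lc ox pp pq lpc lcq.
have [z hz] := lca_exists p q.
have sep := Hlo.2 c p q z lc lp lq lpc lcq hz.
apply: prec_trans sep _; exact: hz.2.2.2 x ox.1 pp pq.
Qed.

Lemma disj M h (x y : pt M) c : on_layer h x -> on_layer h y ->
  prec (leafpt c) x -> prec (leafpt c) y -> x = y.
Proof. move=> ox oy px py; exact: anc_uniq (conj ox px) (conj oy py). Qed.

Lemma convex M (lo : mt_V M -> mt_V M -> Prop) (Hlo : is_leaf_order lo) h (x y : pt M) a1 a2 b1 b2 :
  x <> y -> on_layer h x -> on_layer h y -> leaf a1 -> leaf a2 -> leaf b1 -> leaf b2 ->
  prec (leafpt a1) x -> prec (leafpt a2) x -> prec (leafpt b1) y -> prec (leafpt b2) y ->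
  lo a1 b1 -> lo b2 a2 -> False.
Proof.
move=> ne ox oy la1 la2 lb1 lb2 pa1 pa2 pb1 pb2 l1 l2.
case: (Hlo.1.2.2.2 a2 b1 la2 lb1) => l.
- apply: ne; exact: (disj ox oy pa2 (conv Hlo lb2 lb1 la2 oy pb2 pb1 l2 l)).
- apply: ne; exact: (disj ox oy (conv Hlo la1 la2 lb1 ox pa1 pa2 l1 l) pb1).
Qed.

Lemma part2_layer M (lo : mt_V M -> mt_V M -> Prop) (Hlo : is_leaf_order lo) :
  is_layer_order (T_map lo).
Proof.
have [[lr [las [ltr ltot]]] _] := Hlo.
split; first move=> h h0; [split; [|split; [|split]]|].
- by move=> x _; left.
- move=> x y ox oy [//|Hxy] [e|Hyx]; first by [].
  apply: NNPP => ne.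
  have [_ [a [la pa]]] := layer_leaf ox.
  have [_ [b [lb pb]]] := layer_leaf oy.
  have eab := las a b la lb (Hxy a b la lb pa pb) (Hyx b a lb la pb pa); subst b.
  exact: ne (disj ox oy pa pb).
- move=> x y z ox oy oz [<-//|Hxy] [e|Hyz]; first by subst z; right.
  right => u1 u3 l1 l3 p1 p3.
  have [_ [u2 [l2 p2]]] := layer_leaf oy.
  exact: ltr _ _ _ l1 l2 l3 (Hxy _ _ l1 l2 p1 p2) (Hyz _ _ l2 l3 p2 p3).
- move=> x y ox oy.
  case: (classic (T_map lo h x y)) => [t|hn]; first by left.
  right; case: (classic (y = x)) => [e|ne]; first by left.
  right => b a lb la pb pa; apply: NNPP => nba.
  apply: hn; right => a' b' la' lb' pa' pb'; apply: NNPP => nab.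
  have lab : lo a b by case: (ltot a b la lb) => // ?; case: nba.
  have lba' : lo b' a' by case: (ltot a' b' la' lb') => // ?; case: nab.
  exact: (convex Hlo (fun e => ne (esym e)) ox oy la la' lb lb' pa pa' pb pb' lab lba').
- move=> h1 h2 x1 x2 y1 y2 h0 h12 o1 o2 [e|H] a1 a2.
    by subst x2; left; exact: anc_uniq a1 a2.
  case: (classic (y1 = y2)) => [e|ne]; first by left.
  right => a b la lb pa pb; apply: NNPP => nab.
  have lba : lo b a by case: (ltot a b la lb) => // ?; case: nab.
  have [_ [a' [la' pa']]] := layer_leaf o1.
  have [_ [b' [lb' pb']]] := layer_leaf o2.
  have l' := H a' b' la' lb' pa' pb'.
  exact: (convex Hlo ne (anc_layer a1) (anc_layer a2) la' la lb' lb
    (prec_trans pa' a1.2) pa (prec_trans pb' a2.2) pb l' lba).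
Qed.

Lemma part2_L M (lo : mt_V M -> mt_V M -> Prop) (Hlo : is_leaf_order lo) u1 u2 :
  leaf u1 -> leaf u2 -> (L_map (T_map lo) u1 u2 <-> lo u1 u2).
Proof.
have [[lr [las [ltr ltot]]] _] := Hlo.
move=> l1 l2; split.
- move=> [y1 [y2 [a1 [a2 [e|H]]]]]; last exact: H _ _ l1 l2 a1.2 a2.2.
  subst y2; suff -> : u1 = u2 by exact: lr.
  case: (Rmax_cases (mt_f u1) (mt_f u2)) => e; rewrite e in a1 a2.
  + by symmetry; apply: leaf_anc_eq l2 l1 a2 a1.
  + exact: leaf_anc_eq l1 l2 a1 a2.
- move=> l12.
  have [y1 [y2 [a1 a2]]] := leaf_ancs l1 l2 (Rmax_l (mt_f u1) (mt_f u2)) (Rmax_r (mt_f u1) (mt_f u2)).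
  exists y1, y2; split => //; split => //.
  case: (classic (y1 = y2)) => [e|ne]; first by left.
  right => a b la lb pa pb; apply: NNPP => nab.
  have lba : lo b a by case: (ltot a b la lb) => // ?; case: nab.
  exact: (convex Hlo ne (anc_layer a1) (anc_layer a2) l1 la l2 lb a1.2 pa a2.2 pb l12 lba).
Qed.

Theorem theorem10 (M : merge_tree) :
  (forall le : R -> pt M -> pt M -> Prop,
     is_layer_order le ->
     is_leaf_order (L_map le) /\
     (forall h, 0 <= h -> forall x1 x2, on_layer h x1 -> on_layer h x2 ->
        (T_map (L_map le) h x1 x2 <-> le h x1 x2))) /\
  (forall lo : mt_V M -> mt_V M -> Prop,
     is_leaf_order lo ->
     is_layer_order (T_map lo) /\
     (forall u1 u2, leaf u1 -> leaf u2 -> (L_map (T_map lo) u1 u2 <-> lo u1 u2))).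
Proof.
split=> [le Hle|lo Hlo]; split.
- exact: part1_leaf.
- exact: part1_T.
- exact: part2_layer.
- exact: part2_L.
Qed.
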